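(* Let $\mathcal P$ be a finite subset of $\mathcal W$ and let $P(1),P(2),P(3),\ldots$ be a sequence of matrices from $\mathcal P$. Suppose $j_1<j_2<\cdots$ is an infinite increasing sequence of indices such that each $P(j_r)$ is a Sarymsakov matrix. If there exists an integer $T$ such that $j_{r+1}-j_r\le T$ for all $r\ge1$, then $P(k)\cdots P(1)$ converges as $k\to\infty$ to a rank-one matrix $\mathbf 1c^T$ with $c_i\ge0$ and $\sum_i c_i=1$.
   Context: Let $\mathcal N=\{1,\ldots,n\}$; all matrices are $n\times n$. A matrix is stochastic if it is entrywise nonnegative with row sums $1$. For stochastic $P$ and $\mathcal A\subseteq\mathcal N$, $F_P(\mathcal A)=\{j:\ p_{ij}>0\text{ for some } i\in\mathcal A\}$. A Sarymsakov matrix is a stochastic $P$ such that for any disjoint nonempty $\mathcal A,\tilde{\mathcal A}\subseteq\mathcal N$, either $F_P(\mathcal A)\cap F_P(\tilde{\mathcal A})\neq\emptyset$, or $F_P(\mathcal A)\cap F_P(\tilde{\mathcal A})=\emptyset$ and $|F_P(\mathcal A)\cup F_P(\tilde{\mathcal A})|>|\mathcal A\cup\tilde{\mathcal A}|$. $\mathcal W$ is the set of stochastic $P$ such that for any disjoint nonempty $\mathcal A,\tilde{\mathcal A}\subseteq\mathcal N$, either $F_P(\mathcal A)\cap F_P(\tilde{\mathcal A})\neq\emptyset$, or $F_P(\mathcal A)\cap F_P(\tilde{\mathcal A})=\emptyset$ and $|F_P(\mathcal A)\cup F_P(\tilde{\mathcal A})|\ge|\mathcal A\cup\tilde{\mathcal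 A}|$. $\mathbf 1$ is the all-ones column vector. *)

(* Defs.v *)
From Stdlib Require Import Reals.
From HB Require Import structures.
From mathcomp Require Import all_boot.
Set Implicit Arguments. Unset Strict Implicit. Unset Printing Implicit Defensive.

Definition mat (n : nat) := 'I_n -> 'I_n -> R.

Definition rsum (n : nat) (f : 'I_n -> R) : R := \big[Rplus/R0]_(i < n) f i.

Definition mmul (n : nat) (A B : mat n) : mat n :=
  fun i j => rsum (fun k => Rmult (A i k) (B k j)).

Definition idm (n : nat) : mat n := fun i j => if i == j then R1 else R0.

Definition stochastic (n : nat) (P : mat n) : Prop :=
  (forall i j, Rle R0 (P i j)) /\ (forall i, rsum (P i) = R1).

Definition posb (x : R) : bool := if Rlt_dec R0 x then true else false.

Definition Fset (n : nat) (P : mat n) (A : {set 'I_n}) : {set 'I_n} :=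
  [set j | [exists i in A, posb (P i j)]].

Definition sarymsakov (n : nat) (P : mat n) : Prop :=
  stochastic P /\
  forall A B : {set 'I_n}, A != set0 -> B != set0 -> [disjoint A & B] ->
    (Fset P A :&: Fset P B != set0) \/
    (Fset P A :&: Fset P B = set0 /\ #|A :|: B| < #|Fset P A :|: Fset P B|).

Definition inW (n : nat) (P : mat n) : Prop :=
  stochastic P /\
  forall A B : {set 'I_n}, A != set0 -> B != set0 -> [disjoint A & B] ->
    (Fset P A :&: Fset P B != set0) \/
    (Fset P A :&: Fset P B = set0 /\ #|A :|: B| <= #|Fset P A :|: Fset P B|).

(* lprod Ps k = Ps k * Ps (k-1) * ... * Ps 1 (identity for k = 0). *)
Fixpoint lprod (n : nat) (Ps : nat -> mat n) (k : nat) : mat n :=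
  match k with
  | 0 => @idm n
  | S k' => mmul (Ps k) (lprod Ps k')
  end.

(* Main.v *)
Require Import Defs.
From Stdlib Require Import Reals FunctionalExtensionality.
From HB Require Import structures.
From mathcomp Require Import all_boot all_order all_algebra.
From mathcomp Require Import Rstruct zify.
From mathcomp.algebra_tactics Require Import ring lra.
Set Implicit Arguments. Unset Strict Implicit. Unset Printing Implicit Defensive.
Import Order.TTheory GRing.Theory Num.Theory.
Local Open Scope ring_scope.

Section Basics.
Variable n : nat.
Implicit Types (P Q M : mat n).

Lemma rsumE (f : 'I_n -> R) : rsum f = \sum_(i < n) f i.
Proof. by []. Qed.

Lemma mmulE P Q i j : mmul P Q i j = \sum_(k < n) P i k * Q k j.
Proof. by []. Qed.

Lemma posbE x : posb x = (0 < x).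
Proof. rewrite /posb; case: Rlt_dec => [/RltP -> //|/RltP/negbTE -> //]. Qed.

Definition nonneg P := forall i j, 0 <= P i j.

Lemma stoch_nonneg P : stochastic P -> nonneg P.
Proof. by case=> h _ i j; apply/RleP. Qed.

Lemma stoch_sum P i : stochastic P -> \sum_(k < n) P i k = 1.
Proof. by case=> _ h; exact: h. Qed.

Lemma stochasticI P : nonneg P -> (forall i, \sum_(k < n) P i k = 1) -> stochastic P.
Proof. by move=> h1 h2; split=> [i j|i]; [apply/RleP|exact: h2]. Qed.

Lemma sum_pos (f : 'I_n -> R) : (forall i, 0 <= f i) ->
  (0 < \sum_(i < n) f i) = [exists i, 0 < f i].
Proof.
move=> h; apply/idP/existsP.
  move=> hs; apply/existsP; move: hs; apply: contraLR => /existsPn hn.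
  rewrite -leNgt big1 // => i _; apply/eqP; rewrite eq_le h andbT leNgt; exact: hn.
case=> i hi; rewrite (bigD1 i) //=; apply: ltr_wpDr => //; exact: sumr_ge0.
Qed.

Lemma mmul_pos P Q i j : nonneg P -> nonneg Q ->
  (0 < mmul P Q i j) = [exists k, (0 < P i k) && (0 < Q k j)].
Proof.
move=> hP hQ; rewrite mmulE sum_pos; last by move=> k; apply: mulr_ge0.
apply/existsP/existsP => -[k hk]; exists k.
  by move: hk; rewrite lt_def mulf_eq0 negb_or => /andP[/andP[a b] _]; rewrite !lt_def a b hP hQ.
by case/andP: hk => a b; exact: mulr_gt0.
Qed.

Lemma inFset P A y : (y \in Fset P A) = [exists i in A, 0 < P i y].
Proof. by rewrite inE; apply: eq_existsb => i; rewrite posbE. Qed.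

Lemma Fset_mmul P Q A : nonneg P -> nonneg Q ->
  Fset (mmul P Q) A = Fset Q (Fset P A).
Proof.
move=> hP hQ; apply/setP => y; rewrite !inFset.
apply/existsP/existsP => -[x /andP[xA hx]].
  move: hx; rewrite mmul_pos // => /existsP[k /andP[a b]].
  by exists k; rewrite b andbT inFset; apply/existsP; exists x; rewrite xA.
move: xA; rewrite inFset => /existsP[i /andP[iA hi]].
exists i; rewrite iA /= mmul_pos //; apply/existsP; exists x; by rewrite hi hx.
Qed.

Lemma Fset_idm A : Fset (@idm n) A = A.
Proof.
apply/setP => y; rewrite inFset; apply/existsP/idP.
  by case=> x /andP[xA]; rewrite /idm; case: eqP => [<- _ //|_]; rewrite ltxx.
by move=> yA; exists y; rewrite yA /idm eqxx /=; exact: ltr01.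
Qed.

Lemma row_pos P i : stochastic P -> exists k, 0 < P i k.
Proof.
move=> hP; have := stoch_sum i hP; move=> e.
have : 0 < \sum_(k < n) P i k by rewrite e ltr01.
rewrite sum_pos; last by move=> k; exact: stoch_nonneg.
by move/existsP.
Qed.

Lemma Fset_nonempty P A : stochastic P -> A != set0 -> Fset P A != set0.
Proof.
move=> hP /set0Pn[x xA]; have [k hk] := row_pos x hP.
apply/set0Pn; exists k; rewrite inFset; apply/existsP; exists x; by rewrite xA.
Qed.

Lemma Fset_meet P A B : stochastic P -> A :&: B != set0 ->
  Fset P A :&: Fset P B != set0.
Proof.
move=> hP /set0Pn[x]; rewrite inE => /andP[xA xB]; have [k hk] := row_pos x hP.
apply/set0Pn; exists k; rewrite inE !inFset; apply/andP; split; apply/existsP; exists x.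
  by rewrite xA. by rewrite xB.
Qed.

Lemma mmulA P Q M : mmul (mmul P Q) M = mmul P (mmul Q M).
Proof.
apply: functional_extensionality_dep => i; apply: functional_extensionality_dep => j.
rewrite !mmulE.
under eq_bigr => k _ do rewrite mmulE big_distrl /=.
rewrite exchange_big /=; apply: eq_bigr => l _; rewrite mmulE big_distrr /=.
by apply: eq_bigr => k _; rewrite mulrA.
Qed.

Lemma stoch_mmul P Q : stochastic P -> stochastic Q -> stochastic (mmul P Q).
Proof.
move=> hP hQ; apply: stochasticI.
  by move=> i j; rewrite mmulE; apply: sumr_ge0 => k _; apply: mulr_ge0; apply: stoch_nonneg.
move=> i; under eq_bigr => j _ do rewrite mmulE.
rewrite exchange_big /= -(stoch_sum i hP); apply: eq_bigr => k _.
by rewrite -big_distrr /= stoch_sum // mulr1.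
Qed.

Lemma stoch_idm : stochastic (@idm n).
Proof.
apply: stochasticI.
  by move=> i j; rewrite /idm; case: eqP => _; [exact: ler01|exact: lexx].
move=> i; rewrite (bigD1 i) //= big1 ?addr0 /idm ?eqxx // => k; rewrite eq_sym.
by move/negbTE => ->.
Qed.

End Basics.

Section Comb.
Variable n : nat.
Variable Q : nat -> mat n.
Hypothesis hQ : forall t, (1 <= t)%N -> inW (Q t).

Lemma stoch_lprod m : stochastic (lprod Q m).
Proof.
elim: m => [|m IH] /=; first exact: stoch_idm.
by apply: stoch_mmul => //; case: (hQ (ltn0Sn m)).
Qed.

Lemma strict_mono (f : nat -> nat) : (forall i, f i < f i.+1)%N ->
  forall i i', (i < i')%N -> (f i < f i')%N.
Proof.
move=> h i i' lt; rewrite -(subnKC lt); elim: (i' - i.+1)%N => [|d IH].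
  by rewrite addn0.
by rewrite addnS; exact: ltn_trans IH (h _).
Qed.

Lemma claim m : forall k (f : nat -> nat), (forall i, f i < f i.+1)%N ->
  (forall i, (i < k)%N -> (1 <= f i <= m)%N) -> (forall i, (i < k)%N -> sarymsakov (Q (f i))) ->
  forall A B : {set 'I_n}, A != set0 -> B != set0 -> [disjoint A & B] ->
  (Fset (lprod Q m) A :&: Fset (lprod Q m) B != set0) \/
  (#|A :|: B| + k <= #|Fset (lprod Q m) A :|: Fset (lprod Q m) B|)%N.
Proof.
elim: m => [|m IH] k f hinc hr hs A B hA hB hD.
  case: k hr hs => [|k] hr hs; last by have := hr 0%N isT; case/andP => a b; lia.
  by right; rewrite /= !Fset_idm addn0.
have [hst hW] := hQ (ltn0Sn m).
have hnn := stoch_nonneg hst.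
have hnl := stoch_nonneg (stoch_lprod m).
rewrite /= !Fset_mmul //.
set A' := Fset (Q m.+1) A; set B' := Fset (Q m.+1) B.
have hA' : A' != set0 by exact: Fset_nonempty.
have hB' : B' != set0 by exact: Fset_nonempty.
case: (hW A B hA hB hD) => [hi|[hd hc]].
  by left; apply: Fset_meet => //; exact: stoch_lprod.
have hD' : [disjoint A' & B'] by rewrite -setI_eq0 hd.
case: k hr hs => [|k] hr hs.
  case: (IH 0%N f hinc _ _ A' B' hA' hB' hD') => [i//|i//|h|h]; first by left.
  right; rewrite /A' /B' addn0 in h; rewrite addn0; exact: leq_trans hc h.
case: (f k =P m.+1) => e.
  have hsk := hs k (ltnSn k); rewrite e in hsk.
  case: hsk => _ /(_ A B hA hB hD) [hi|[_ hc2]]; first by rewrite hd eqxx in hi.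
  case: (IH k f hinc _ _ A' B' hA' hB' hD') => [||h|h]; last 2 first.
  - by left.
  - right; apply: leq_trans h; rewrite addnS -addSn leq_add2r; exact: hc2.
  - move=> i ik; have := hr i (ltnW ik); have := strict_mono hinc ik; rewrite e.
    by move=> c /andP[a _]; rewrite a.
  - by move=> i ik; apply: hs; exact: ltnW.
have hfk : (f k <= m)%N by have := hr k (ltnSn k); case/andP => _ b; move/eqP: e; lia.
case: (IH k.+1 f hinc _ hs A' B' hA' hB' hD') => [|h|h]; last 2 first.
  - by left.
  - right; apply: leq_trans h; rewrite leq_add2r; exact: hc.
  move=> i ik; have := hr i ik; case/andP => -> _ /=.
  rewrite ltnS leq_eqVlt in ik; case/orP: ik => [/eqP -> //|ik].
  exact: leq_trans (ltnW (strict_mono hinc ik)) hfk.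

Qed.

Lemma scramble m (f : nat -> nat) : (forall i, f i < f i.+1)%N ->
  (forall i, (i < n.-1)%N -> (1 <= f i <= m)%N) -> (forall i, (i < n.-1)%N -> sarymsakov (Q (f i))) ->
  forall i i', exists c, 0 < lprod Q m i c /\ 0 < lprod Q m i' c.
Proof.
move=> hinc hr hs i i'.
case: (i =P i') => [<-|ne].
  by have [c hc] := row_pos i (stoch_lprod m); exists c.
have hD : [disjoint [set i] & [set i']] by rewrite disjoints1 inE; apply/eqP.
have s1 : forall x : 'I_n, [set x] != set0 by move=> x; apply/set0Pn; exists x; rewrite inE.
case: (claim hinc hr hs (s1 i) (s1 i') hD) => [|h].
  case/set0Pn => c; rewrite inE !inFset => /andP[/existsP[x /andP[xi hx]] /existsP[y /andP[yi hy]]].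
  by move: xi yi hx hy; rewrite !inE => /eqP -> /eqP ->; exists c.
exfalso.
have c2 : #|[set i] :|: [set i']| = 2%N by rewrite cards2; move/eqP/negbTE: ne => ->.
have := max_card (Fset (lprod Q m) [set i] :|: Fset (lprod Q m) [set i']).
rewrite c2 in h; rewrite card_ord; have := ltn_ord i; lia.
Qed.
End Comb.

Section Analysis.
Variable n : nat.
Implicit Types (P Q M B : mat n).

Lemma nonneg_lprod (Q : nat -> mat n) : (forall t, (1 <= t)%N -> nonneg (Q t)) ->
  forall m, nonneg (lprod Q m).
Proof.
move=> hQ; elim=> [|m IH] /=.
  by move=> i j; rewrite /idm; case: eqP => _; [exact: ler01|exact: lexx].
move=> i j; rewrite mmulE; apply: sumr_ge0 => k _; apply: mulr_ge0 => //; exact: hQ.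
Qed.

Lemma lprod_lb (Q : nat -> mat n) (e : R) : 0 < e ->
  (forall t, (1 <= t)%N -> nonneg (Q t)) ->
  (forall t, (1 <= t)%N -> forall i j, 0 < Q t i j -> e <= Q t i j) ->
  forall m i j, 0 < lprod Q m i j -> e ^+ m <= lprod Q m i j.
Proof.
move=> he hQ hlb; elim=> [|m IH] i j /=.
  by rewrite /idm expr0; case: eqP => _; [rewrite lexx|rewrite ltxx].
have hnl := nonneg_lprod hQ m; have hq := hQ m.+1 (ltn0Sn m).
rewrite mmul_pos // => /existsP[k /andP[a b]].
rewrite mmulE (bigD1 k) //= -(addr0 (e ^+ m.+1)); apply: lerD; last first.
  by apply: sumr_ge0 => l _; apply: mulr_ge0.
rewrite exprS; apply: ler_pM; [exact: ltW|apply: exprn_ge0; exact: ltW| |].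
  exact: hlb. exact: IH.
Qed.

Lemma mmul1l M : mmul (@idm n) M = M.
Proof.
apply: functional_extensionality_dep => i; apply: functional_extensionality_dep => j.
rewrite mmulE (bigD1 i) //= big1 ?addr0 /idm ?eqxx ?mul1r // => k; rewrite eq_sym.
by move/negbTE => ->; rewrite mul0r.
Qed.

Lemma lprod_shift (P : nat -> mat n) a m :
  lprod P (a + m) = mmul (lprod (fun t => P (a + t)%N) m) (lprod P a).
Proof.
elim: m => [|m IH]; first by rewrite addn0 /= mmul1l.
by rewrite addnS /= IH -mmulA addnS.
Qed.

Lemma diff_expand B (x : 'I_n -> R) i i' : stochastic B ->
  \sum_l B i l * x l - \sum_l B i' l * x l =
  \sum_l \sum_l' B i l * B i' l' * (x l - x l').
Proof.
move=> hB.
transitivity (\sum_l \sum_l' (B i l * x l * B i' l' - B i l * (B i' l' * x l'))); last first.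
  by apply: eq_bigr => l _; apply: eq_bigr => l' _; ring.
symmetry; under eq_bigr => l _ do rewrite sumrB -big_distrr -big_distrr /= stoch_sum // mulr1.
by rewrite big_split /= sumrN -big_distrl /= stoch_sum // mul1r.
Qed.

Lemma osc1 B (x : 'I_n -> R) d : stochastic B -> (forall l l', x l - x l' <= d) ->
  forall i i', \sum_l B i l * x l - \sum_l B i' l * x l <= d.
Proof.
move=> hB hx i i'; rewrite diff_expand //.
have hn := stoch_nonneg hB.
apply: (@le_trans _ _ (\sum_l \sum_l' B i l * B i' l' * d)).
  apply: ler_sum => l _; apply: ler_sum => l' _; apply: ler_wpM2l => //.
  exact: mulr_ge0.
under eq_bigr => l _ do rewrite -big_distrl -big_distrr /= stoch_sum // mulr1.
by rewrite -big_distrl /= stoch_sum // mul1r.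
Qed.

Lemma osc2 B (x : 'I_n -> R) d g i i' k : stochastic B -> (forall l l', x l - x l' <= d) ->
  0 <= g -> g <= B i k -> g <= B i' k ->
  \sum_l B i l * x l - \sum_l B i' l * x l <= (1 - g ^+ 2) * d.
Proof.
move=> hB hx hg hk hk'; rewrite diff_expand //.
have hn := stoch_nonneg hB.
have hd : 0 <= d by have := hx k k; rewrite subrr.
pose U (p : 'I_n * 'I_n) := B i p.1 * B i' p.2 * d.
have hU : \sum_p U p = d.
  rewrite /U -(pair_bigA _ (fun l l' => B i l * B i' l' * d)) /=.
  under eq_bigr => l _ do rewrite -big_distrl -big_distrr /= stoch_sum // mulr1.
  by rewrite -big_distrl /= stoch_sum // mul1r.
rewrite (pair_bigA _ (fun l l' => B i l * B i' l' * (x l - x l'))) /=.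
rewrite (bigD1 (k, k)) //= subrr mulr0 add0r.
apply: (@le_trans _ _ (\sum_(p | p != (k, k)) U p)).
  apply: ler_sum => p _; apply: ler_wpM2l => //; exact: mulr_ge0.
have := hU; rewrite (bigD1 (k, k)) //= => hU'.
have -> : \sum_(p | p != (k, k)) U p = d - U (k, k) by rewrite -hU'; ring.
rewrite /U /=.
have : g ^+ 2 <= B i k * B i' k by rewrite expr2; apply: ler_pM.
move=> h; have := ler_wpM2r hd h; lra.
Qed.

Lemma osc3 B (x : 'I_n -> R) d i : stochastic B -> (forall l l', x l - x l' <= d) ->
  \sum_l B i l * x l - x i <= d /\ x i - \sum_l B i l * x l <= d.
Proof.
move=> hB hx; have hn := stoch_nonneg hB.
have e : \sum_l B i l * x l - x i = \sum_l B i l * (x l - x i).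
  symmetry; under eq_bigr => l _ do rewrite mulrBr.
  by rewrite big_split /= sumrN -big_distrl /= stoch_sum // mul1r.
have hs : \sum_l B i l * d = d by rewrite -big_distrl /= stoch_sum // mul1r.
split.
  rewrite e -hs; apply: ler_sum => l _; apply: ler_wpM2l => //.
rewrite -opprB e -sumrN -hs; apply: ler_sum => l _.
rewrite -mulrN opprB; apply: ler_wpM2l => //.
Qed.

End Analysis.

Lemma block_chain (n : nat) (j : nat -> nat) (T a : nat) : (1 <= j 1)%N ->
  (forall r, (1 <= r)%N -> j r < j r.+1)%N ->
  (forall r, (1 <= r)%N -> j r.+1 - j r <= T)%N -> (j 1 <= a)%N ->
  exists f : nat -> nat, (forall i, f i < f i.+1)%N /\
    (forall i, (i < n.-1)%N -> (1 <= f i <= T * n)%N) /\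
    (forall i, exists r, (1 <= r)%N /\ (a + f i)%N = j r).
Proof.
move=> hj1 hinc hT ha.
have jge : forall r, (1 <= r)%N -> (r <= j r)%N.
  elim=> [//|r IH] _; case: r IH => [|r] IH; first by [].
  have := hinc r.+1 isT; have := IH isT; lia.
have hex : exists r, (1 <= r)%N && (a < j r)%N.
  exists a.+2; have := jge a.+2 isT; lia.
have [r0 /andP[r0pos ar0] r0min] := ex_minnP hex.
have r0ge2 : (2 <= r0)%N.
  case: r0 r0pos ar0 r0min => [//|[|r]] // _ ar0 _; lia.
have jprev : (j r0.-1 <= a)%N.
  rewrite leqNgt; apply/negP => h.
  have := r0min r0.-1; rewrite h andbT; have -> : (1 <= r0.-1)%N by lia.
  move=> /(_ isT); lia.
have hjr0 : (j r0 <= a + T)%N.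
  have := hT r0.-1 ltac:(lia); have := hinc r0.-1 ltac:(lia).
  have -> : r0.-1.+1 = r0 by lia. lia.
have hbound : forall i, (a < j (r0 + i) <= a + T * i.+1)%N.
  elim=> [|i IH]; first by rewrite addn0 muln1 ar0 hjr0.
  have := hT (r0 + i)%N ltac:(lia); have := hinc (r0 + i)%N ltac:(lia).
  rewrite addnS mulnS; lia.
exists (fun i => j (r0 + i) - a)%N; split; [|split].
- move=> i; have := hbound i; have := hinc (r0 + i)%N ltac:(lia); rewrite addnS; lia.
- move=> i hi; have := hbound i; have : (T * i.+1 <= T * n)%N.
    by apply: leq_mul => //; lia.
  lia.
- move=> i; exists (r0 + i)%N; split; first lia.
  have := hbound i; lia.
Qed.

Lemma eps_list (l : list R) : exists e : R, 0 < e /\ e <= 1 /\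
  forall x, List.In x l -> 0 < x -> e <= x.
Proof.
elim: l => [|a l [e [he [he1 hl]]]]; first by exists 1; split; [exact: ltr01|split].
case: (boolP (0 < a)) => ha.
  exists (Num.min e a); split; first by rewrite lt_min he ha.
  split; first by rewrite ge_min he1.
  move=> x /= [<-|hx] hx0; first by rewrite ge_min lexx orbT.
  by rewrite ge_min hl.
exists e; split => //; split => // x /= [<-|hx] hx0; first by rewrite hx0 in ha.
exact: hl.
Qed.

Lemma inseq (T : eqType) (x : T) (s : seq T) : x \in s -> List.In x s.
Proof. by elim: s => //= a s IH; rewrite inE => /orP[/eqP->|/IH]; [left|right]. Qed.

Lemma eps_mats n (Pset : list (mat n)) : exists e : R, 0 < e /\ e <= 1 /\
  forall M, List.In M Pset -> forall i j, 0 < M i j -> e <= M i j.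
Proof.
have [e [he [he1 hl]]] := eps_list
  (List.flat_map (fun M : mat n => List.map (fun p : 'I_n * 'I_n => M p.1 p.2)
     (enum {: 'I_n * 'I_n})) Pset).
exists e; split => //; split => // M hM i j hij; apply: hl => //.
apply/List.in_flat_map; exists M; split => //.
apply: (List.in_map (fun p : 'I_n * 'I_n => M p.1 p.2) _ (i, j)).
by apply: inseq; rewrite mem_enum.
Qed.

Lemma RdistE x y : Rdist x y = `|x - y|. Proof. by []. Qed.

Lemma main_ring (n : nat) (Hn : (0 < n)%N)
  (Pset : list (mat n)) (HPset : forall M, List.In M Pset -> inW M)
  (Pseq : nat -> mat n) (HPseq : forall k, (1 <= k)%N -> List.In (Pseq k) Pset)
  (j : nat -> nat) (Hj1 : (1 <= j 1)%N)
  (Hjinc : forall r, (1 <= r)%N -> (j r < j r.+1)%N)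
  (Hsar : forall r, (1 <= r)%N -> sarymsakov (Pseq (j r)))
  (T : nat) (HT : forall r, (1 <= r)%N -> (j r.+1 - j r <= T)%N) :
  exists c : 'I_n -> R,
    (forall i, 0 <= c i) /\ \sum_(i < n) c i = 1 /\
    (forall i i', Un_cv (fun k => lprod Pseq k i i') (c i')).
Proof.
have hW : forall t, (1 <= t)%N -> inW (Pseq t) by move=> t ht; apply: HPset; exact: HPseq.
have hQa : forall a t, (1 <= t)%N -> inW (Pseq (a + t)%N).
  by move=> a t ht; apply: hW; rewrite addn_gt0 ht orbT.
have [e [he [he1 hlb]]] := eps_mats Pset.
pose L := (T * n)%N.
pose g := e ^+ L.
pose rho := 1 - g ^+ 2.
have hg : 0 < g by exact: exprn_gt0.
have hg1 : g <= 1 by apply: exprn_ile1 => //; exact: ltW.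
have hg2 : 0 < g ^+ 2 by exact: exprn_gt0.
have hg21 : g ^+ 2 <= 1 by apply: exprn_ile1 => //; exact: ltW.
have hrho0 : 0 <= rho by rewrite /rho; lra.
have hrho1 : rho < 1 by rewrite /rho; lra.
pose u k := lprod Pseq k.
pose ob k d := forall jj i i', u k i jj - u k i' jj <= d.
have ob_ext : forall k d m, ob k d -> ob (k + m)%N d.
  move=> k d m h jj i i'; rewrite /u lprod_shift !mmulE.
  exact: (osc1 (x := fun l => lprod Pseq k l jj) (@stoch_lprod n (fun t => Pseq (k + t)%N) (hQa k) m) (h jj) i i').
have ob0 : ob 0%N 1.
  move=> jj i i'; rewrite /u /= /idm.
  case: eqP => _; case: eqP => _; rewrite /=;
  try change R1 with (1%R : R); try change R0 with (0%R : R); lra.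
have contract : forall a d, (j 1 <= a)%N -> ob a d -> ob (a + L)%N (rho * d).
  move=> a d ha h jj i i'.
  have [f [finc [fb fs]]] := block_chain n Hj1 Hjinc HT ha.
  have hsar : forall i0, (i0 < n.-1)%N -> sarymsakov (Pseq (a + f i0)%N).
    by move=> i0 _; have [r [hr ->]] := fs i0; exact: Hsar.
  have [c [hc hc']] := @scramble n (fun t => Pseq (a + t)%N) (hQa a) L f finc fb hsar i i'.
  have hnnQ : forall t, (1 <= t)%N -> nonneg (Pseq (a + t)%N).
    by move=> t ht; apply: stoch_nonneg; case: (hQa a t ht).
  have hlbQ : forall t, (1 <= t)%N -> forall i j, 0 < Pseq (a + t)%N i j -> e <= Pseq (a + t)%N i j.
    move=> t ht i0 j0; apply: hlb; apply: HPseq; by rewrite addn_gt0 ht orbT.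
  have lb1 := @lprod_lb n (fun t => Pseq (a + t)%N) e he hnnQ hlbQ L _ _ hc.
  have lb2 := @lprod_lb n (fun t => Pseq (a + t)%N) e he hnnQ hlbQ L _ _ hc'.
  rewrite /u lprod_shift !mmulE /rho.
  exact: (osc2 (x := fun l => lprod Pseq a l jj) (@stoch_lprod n (fun t => Pseq (a + t)%N) (hQa a) L) (h jj) (ltW hg) lb1 lb2).
have geo : forall m, ob (j 1 + m * L)%N (rho ^+ m).
  elim=> [|m IH].
    rewrite mul0n addn0 expr0; have := ob_ext 0%N 1 (j 1) ob0; by rewrite add0n.
  have -> : (j 1 + m.+1 * L = (j 1 + m * L) + L)%N by rewrite mulSn; lia.
  rewrite exprS; apply: contract => //; lia.
have hm : forall eps, 0 < eps -> exists m, rho ^+ m < eps.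
  move=> eps heps.
  have hr : Rlt (Rabs rho) 1 by apply/RltP; have -> : Rabs rho = `|rho| by []; rewrite ger0_norm.
  have [N hN] := pow_lt_1_zero rho hr eps (elimT RltP heps).
  exists N; have := hN N (le_n N); rewrite RpowE => /RltP.
  by have -> : Rabs (rho ^+ N) = `|rho ^+ N| by []; rewrite ger0_norm // exprn_ge0.
pose N0 m := (j 1 + m * L)%N.
have obk : forall m k, (N0 m <= k)%N -> ob k (rho ^+ m).
  move=> m k hk; have := ob_ext _ _ (k - N0 m)%N (geo m); by rewrite subnKC.
have close1 : forall m k k' i jj, (N0 m <= k)%N -> (k <= k')%N ->
    u k' i jj - u k i jj <= rho ^+ m /\ u k i jj - u k' i jj <= rho ^+ m.
  move=> m k k' i jj hk hkk'.
  have e1 : u k' = mmul (lprod (fun t => Pseq (k + t)%N) (k' - k)) (u k).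
    by rewrite /u -lprod_shift subnKC.
  rewrite e1 !mmulE.
  have H := (osc3 (x := fun l => u k l jj) i (@stoch_lprod n (fun t => Pseq (k + t)%N) (hQa k) (k' - k)%N) (obk m k hk jj)).
  exact: H.
have tail : forall eps, 0 < eps -> exists N, forall k k' i i' jj,
    (N <= k)%N -> (N <= k')%N -> `|u k i jj - u k' i' jj| < eps.
  move=> eps heps; have [m hm'] := hm (eps / 2) ltac:(lra).
  exists (N0 m) => k k' i i' jj hk hk'; rewrite ltr_norml.
  case: (leqP k k') => hkk'.
    have [a1 a2] := close1 m k k' i' jj hk hkk'.
    have b1 := obk m k hk jj i i'; have b2 := obk m k hk jj i' i.
    apply/andP; split; lra.
  have [a1 a2] := close1 m k' k i jj hk' (ltnW hkk').
  have b1 := obk m k' hk' jj i i'; have b2 := obk m k' hk' jj i' i.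
  apply/andP; split; lra.
pose i0 : 'I_n := Ordinal Hn.
have hnn : forall t, (1 <= t)%N -> nonneg (Pseq t).
  by move=> t ht; apply: stoch_nonneg; case: (hW t ht).
have hnl := nonneg_lprod hnn.
have cauchy : forall jj, Cauchy_crit (fun k => u k i0 jj).
  move=> jj eps heps; have {heps} heps : 0 < eps by apply/RltP.
  have [N hN] := tail eps heps.
  by exists N => a b /ssrnat.leP ha /ssrnat.leP hb; apply/RltP; rewrite RdistE; exact: hN.
pose c jj := proj1_sig (R_complete _ (cauchy jj)).
have hc : forall jj, Un_cv (fun k => u k i0 jj) (c jj).
  by move=> jj; exact: (proj2_sig (R_complete _ (cauchy jj))).
have cvall : forall i jj, Un_cv (fun k => u k i jj) (c jj).
  move=> i jj eps heps; have {heps} heps : 0 < eps by apply/RltP.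
  have [N1 h1] := tail (eps / 2) ltac:(lra).
  pose e2 := eps / 2.
  have he2 : 0 < e2 by rewrite /e2; lra.
  have [N2 h2] := hc jj e2 (elimT RltP he2).
  exists (maxn N1 N2) => k /ssrnat.leP hk; apply/RltP; rewrite RdistE.
  have := h2 k ltac:(apply/ssrnat.leP; exact: leq_trans (leq_maxr _ _) hk) => /RltP.
  rewrite RdistE ltr_norml => /andP[a1 a2].
  have := h1 k k i i0 jj (leq_trans (leq_maxl _ _) hk) (leq_trans (leq_maxl _ _) hk).
  rewrite ltr_norml => /andP[b1 b2].
  rewrite /e2 in a1 a2; rewrite ltr_norml; apply/andP; split; lra.
exists c; split; [|split].
- move=> jj; rewrite leNgt; apply/negP => hlt.
  pose e2 := - c jj.
  have he2 : 0 < e2 by rewrite /e2; lra.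
  have [N hN] := hc jj e2 (elimT RltP he2).
  have := hN N (le_n N) => /RltP; rewrite RdistE ltr_norml => /andP[_ a1].
  have := hnl N i0 jj; rewrite /u /e2 in a1; lra.
- have cvsum : forall s : seq 'I_n,
      Un_cv (fun k => \sum_(x <- s) u k i0 x) (\sum_(x <- s) c x).
    elim=> [|x s IH].
      move=> eps heps; exists 0%N => k _; rewrite !big_nil RdistE subrr normr0; exact: heps.
    have -> : (fun k => \sum_(y <- x :: s) u k i0 y) = (fun k => u k i0 x + \sum_(y <- s) u k i0 y).
      by apply: functional_extensionality => k; rewrite big_cons.
    rewrite big_cons; exact: (CV_plus _ _ _ _ (hc x) IH).
  have hconst : (fun k => \sum_(x <- index_enum 'I_n) u k i0 x) = (fun _ => 1).
    apply: functional_extensionality => k; apply: stoch_sum; exact: (stoch_lprod hW).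
  have h1 := cvsum (index_enum 'I_n); rewrite hconst in h1.
  have h0 : Un_cv (fun _ : nat => 1) 1.
    by move=> eps heps; exists 0%N => k _; rewrite RdistE subrr normr0; exact: heps.
  exact: (UL_sequence _ _ _ h1 h0).
- by move=> i i'; exact: cvall.
Qed.

Local Close Scope ring_scope.

Theorem corollary1 (n : nat) (Hn : 0 < n)
  (Pset : list (mat n)) (HPset : forall M, List.In M Pset -> inW M)
  (Pseq : nat -> mat n) (HPseq : forall k, 1 <= k -> List.In (Pseq k) Pset)
  (j : nat -> nat) (Hj1 : 1 <= j 1)
  (Hjinc : forall r, 1 <= r -> j r < j r.+1)
  (Hsar : forall r, 1 <= r -> sarymsakov (Pseq (j r)))
  (T : nat) (HT : forall r, 1 <= r -> j r.+1 - j r <= T) :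
  exists c : 'I_n -> R,
    (forall i, Rle R0 (c i)) /\ rsum c = R1 /\
    (forall i i', Un_cv (fun k => lprod Pseq k i i') (c i')).
Proof.
have [c [h1 [h2 h3]]] := main_ring Hn HPset HPseq Hj1 Hjinc Hsar HT.
exists c; split; first by move=> i; apply/RleP.
by split; [exact: h2 | exact: h3].
Qed.
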